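(* Let $K$ be a field of characteristic zero, $x=(x_1,\dots,x_n)$, and let $d\ge 2$. Let $f\in K[x]$ have nonzero terms of degrees $0,1,d$ only, say $f=f^{(0)}+f^{(1)}+f^{(d)}$ with $f^{(k)}$ homogeneous of degree $k$. Suppose that $f$ is reducible and that $\mathcal{J}f=(\partial f/\partial x_1,\dots,\partial f/\partial x_n)$ is unimodular. Then: (a) if $d\le 3$ or $f^{(0)}=0$, then $f$ has a divisor of degree $1$; (b) if $f$ has a divisor of degree $1$, then $f^{(0)}=0$, $f^{(1)}\mid f$ and $(f^{(1)})^2\mid f^{(d)}$.
   Context: A row vector of polynomials in $K[x]$ is unimodular if its entries generate the unit ideal of $K[x]$. *)

(* Defs.v *)
From HB Require Import structures.
From mathcomp Require Import all_boot all_order all_algebra.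
From mathcomp Require Import mpoly.
Set Implicit Arguments. Unset Strict Implicit. Unset Printing Implicit Defensive.
Import Order.TTheory GRing.Theory.
Local Open Scope ring_scope.

Definition mdvd (K : fieldType) (n : nat) (p q : {mpoly K[n]}) : Prop :=
  exists r : {mpoly K[n]}, q = r * p.

Definition mreducible (K : fieldType) (n : nat) (f : {mpoly K[n]}) : Prop :=
  [/\ f != 0, f \isn't a GRing.unit &
      exists g h : {mpoly K[n]},
        [/\ f = g * h, g \isn't a GRing.unit & h \isn't a GRing.unit]].

(* total degree of a nonzero p is (msize p).-1 ; degree 1 <-> msize p = 2 *)
Definition has_linear_divisor (K : fieldType) (n : nat) (f : {mpoly K[n]}) : Prop :=
  exists g : {mpoly K[n]}, msize g = 2%N /\ mdvd g f.

Definition jacobian_unimodular (K : fieldType) (n : nat) (f : {mpoly K[n]}) : Prop :=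
  exists g : 'I_n -> {mpoly K[n]}, \sum_(i < n) g i * f^`M(i) = 1.

(* Main.v *)
Require Import Defs.
From HB Require Import structures.
From mathcomp Require Import all_boot all_order all_algebra.
From mathcomp Require Import mpoly.
From mathcomp Require Import zify ring.
Set Implicit Arguments. Unset Strict Implicit. Unset Printing Implicit Defensive.
Import Order.TTheory GRing.Theory.
Local Open Scope ring_scope.

Section Comp.
Variables (K : fieldType) (n : nat).
Implicit Types (p q r : {mpoly K[n]}).

Definition cp (k : nat) p := pihomog mdeg k p.

Lemma cp_homog k p : p \is k.-homog -> cp k p = p.
Proof. exact: pihomog_dE. Qed.

Lemma cp_homog0 k j p : p \is k.-homog -> j != k -> cp j p = 0.
Proof. by move=> hp ne; apply: (pihomog_ne0 (d:=k)) => //; rewrite eq_sym. Qed.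

Lemma cpP k p : cp k p \is k.-homog.
Proof. exact: pihomogP. Qed.

Lemma cpD k : {morph cp k : x y / x + y}.
Proof. exact: pihomogD. Qed.

Lemma cpB k : {morph cp k : x y / x - y}.
Proof. exact: pihomogB. Qed.

Lemma cpZ k c p : cp k (c *: p) = c *: cp k p.
Proof. exact: linearZ. Qed.

Lemma cp_sum k I (s : seq I) (P : pred I) (F : I -> {mpoly K[n]}) :
  cp k (\sum_(i <- s | P i) F i) = \sum_(i <- s | P i) cp k (F i).
Proof. exact: raddf_sum. Qed.

Lemma cp_big p k : (msize p <= k)%N -> cp k p = 0.
Proof.
move=> hk; rewrite /cp pihomogE big_seq_cond big_pred0 // => m.
apply/andP => -[/msize_mdeg_lt hm /eqP e]; move: hm; rewrite e; lia.
Qed.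

Lemma cp_partition p N : (msize p <= N)%N -> p = \sum_(j < N) cp j p.
Proof. exact: pihomog_partitionE. Qed.

Lemma cpC k c : cp k c%:MP = if k == 0%N then c%:MP else 0.
Proof.
have h : (c%:MP : {mpoly K[n]}) \is 0.-homog.
  rewrite dhomogE msuppC; case: eqP => //= _; by rewrite andbT mdeg0.
case: eqP => [->|/eqP ne]; first exact: cp_homog.
exact: cp_homog0 h ne.
Qed.

Lemma cpM_homog i k p q : p \is i.-homog ->
  cp k (p * q) = if (i <= k)%N then p * cp (k - i) q else 0.
Proof.
move=> hp; pose N := (msize q + k).+1.
rewrite {1}(@cp_partition q N); last by rewrite /N; lia.
rewrite mulr_sumr cp_sum.
have hh j : (p * cp j q) \is (i + j).-homog by apply: dhomogM => //; apply: cpP.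
rewrite (eq_bigr (fun j : 'I_N => if (i + j == k)%N then p * cp j q else 0)); last first.
  move=> j _; case: eqP => [<-|/eqP ne]; first exact: cp_homog.
  by apply: cp_homog0 (hh j) _; rewrite eq_sym.
rewrite -big_mkcond /=.
case: leqP => hik.
  have hk : (k - i < N)%N by rewrite /N; lia.
  rewrite (big_pred1 (Ordinal hk)) //= => j; rewrite /= -val_eqE /=; lia.
by rewrite big_pred0 // => j; lia.
Qed.

Lemma cpM k p q : cp k (p * q) = \sum_(i < k.+1) cp i p * cp (k - i) q.
Proof.
pose N := (msize p + k).+1.
rewrite {1}(@cp_partition p N); last by rewrite /N; lia.
rewrite mulr_suml cp_sum.
rewrite (eq_bigr (fun i : 'I_N => if (i <= k)%N then cp i p * cp (k - i) q else 0)); last first.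
  by move=> i _; apply: cpM_homog; apply: cpP.
rewrite -big_mkcond /=.
have hk : (k.+1 <= N)%N by rewrite /N; lia.
rewrite -(big_ord_widen_cond N (fun i => true) (fun i => cp i p * cp (k - i) q) hk) /=.
by apply: eq_bigl.
Qed.

Lemma cpM0 p q : cp 0 (p * q) = cp 0 p * cp 0 q.
Proof. by rewrite cpM big_ord1. Qed.

Lemma mcoeff_cp k p m : (cp k p)@_m = if mdeg m == k then p@_m else 0.
Proof.
rewrite /cp pihomogE raddf_sum /=.
rewrite (eq_bigr (fun m' => p@_m' * (m' == m)%:R)); last first.
  by move=> m' _; rewrite mcoeffZ mcoeffX.
case: (boolP (m \in msupp p)) => hm.
  rewrite big_mkcond (bigD1_seq m) ?msupp_uniq //= eqxx mulr1 big1 ?addr0.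
    by case: eqP.
  by move=> m' /negbTE ne; rewrite eq_sym ne mulr0; case: ifP.
rewrite big_seq_cond big1; first by move: hm; rewrite mcoeff_msupp negbK => /eqP ->; case: ifP.
move=> m' /andP[hm' _]; case: eqP => [e|]; last by rewrite mulr0.
by move: hm; rewrite -e hm'.
Qed.

Lemma cp0E p : cp 0 p = (p@_0)%:MP.
Proof.
apply/mpolyP => m; rewrite mcoeff_cp mcoeffC mdeg_eq0.
by case: eqP => [->|_]; rewrite ?mulr1 ?mulr0.
Qed.


Lemma msize_homog k p : p \is k.-homog -> (msize p <= k.+1)%N.
Proof.
move=> /dhomogP h; rewrite msizeE; apply/bigmax_leqP_seq => m hm _.
by rewrite h.
Qed.

Lemma unit_const p : p \is a GRing.unit -> p = (p@_0)%:MP.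
Proof. by move=> /andP[/eqP h _]. Qed.

Lemma const_unit c : c != 0 -> (c%:MP : {mpoly K[n]}) \is a GRing.unit.
Proof.
move=> hc; apply/andP; split; first by rewrite mcoeffC eqxx mulr1.
by rewrite mcoeffC eqxx mulr1 unitfE.
Qed.

Lemma nonunit_msize p : p != 0 -> p \isn't a GRing.unit -> (2 <= msize p)%N.
Proof.
move=> p0 pu; rewrite leqNgt; apply/negP => hs.
have h1 : (msize p <= 1)%N by [].
move: pu; rewrite (msize1_polyC h1) const_unit //.
apply: contra p0 => /eqP e; by rewrite (msize1_polyC h1) e mpolyC0.
Qed.

Lemma unit_cp k p : p \is a GRing.unit -> k != 0%N -> cp k p = 0.
Proof. by move=> /unit_const -> hk; rewrite cpC (negbTE hk). Qed.

Lemma deriv_homog k i p : p \is k.-homog -> p^`M(i) \is k.-1.-homog.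
Proof.
move=> /dhomogP h; apply/dhomogP => m; rewrite mcoeff_msupp mcoeff_deriv => hm.
have : (m + U_(i))%MM \in msupp p.
  by rewrite mcoeff_msupp; apply: contraNneq hm => ->; rewrite mul0rn.
by move=> /h e; move: (mdegD m U_(i)); rewrite e mdeg1 => ->; rewrite addn1.
Qed.

Lemma euler k p : p \is k.-homog -> \sum_(i < n) 'X_i * p^`M(i) = k%:R *: p.
Proof.
move=> /dhomogP h.
rewrite {1 2}[p]mpolyE.
rewrite (eq_bigr (fun i => \sum_(m <- msupp p) p@_m *: ('X_i * ('X_[m])^`M(i)))); last first.
  move=> i _; rewrite raddf_sum mulr_sumr; apply: eq_bigr => m _.
  by rewrite /= mderivZ -scalerAr.
rewrite exchange_big scaler_sumr /=; apply: eq_big_seq => m hm.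
rewrite -scaler_sumr scalerA mulrC -scalerA; congr (_ *: _).
have e : mdeg m = k := h m hm.
rewrite -e (mdegE m) natr_sum scaler_suml; apply: eq_bigr => i _.
rewrite mderivX -scalerAr; case: (posnP (m i)) => hi; first by rewrite hi !scale0r.
congr (_ *: _); rewrite -mpolyXD addmC submK //.
by rewrite lep1mP -lt0n.
Qed.


Definition Eop p := \sum_(i < n) 'X_i * p^`M(i).

Lemma EopM p q : Eop (p * q) = p * Eop q + q * Eop p.
Proof.
rewrite /Eop mulr_sumr mulr_sumr -big_split /=; apply: eq_bigr => i _.
rewrite mderivM; ring.
Qed.

Lemma EopD p q : Eop (p + q) = Eop p + Eop q.
Proof. by rewrite /Eop -big_split /=; apply: eq_bigr => i _; rewrite mderivD mulrDr. Qed.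

Lemma homog0_const p : p \is 0.-homog -> p = (p@_0)%:MP.
Proof. by move=> h; rewrite -cp0E cp_homog. Qed.

Definition inI (g a : {mpoly K[n]}) := exists r, a = r * g.

Lemma inI0 g : inI g 0. Proof. by exists 0; rewrite mul0r. Qed.
Lemma inID g a b : inI g a -> inI g b -> inI g (a + b).
Proof. by move=> [r ->] [s ->]; exists (r + s); rewrite mulrDl. Qed.
Lemma inIN g a : inI g a -> inI g (- a).
Proof. by move=> [r ->]; exists (- r); rewrite mulNr. Qed.
Lemma inIM g a b : inI g b -> inI g (a * b).
Proof. by move=> [r ->]; exists (a * r); rewrite mulrA. Qed.
Lemma inIZ g c a : inI g a -> inI g (c *: a).
Proof. by move=> [r ->]; exists (c *: r); rewrite scalerAl. Qed.

Lemma cong_mul g a b a' b' : inI g (a - a') -> inI g (b - b') -> inI g (a * b - a' * b').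
Proof.
move=> ha hb; have -> : a * b - a' * b' = a * (b - b') + b' * (a - a') by ring.
by apply: inID; apply: inIM.
Qed.

Lemma cong_exp g a a' e : inI g (a - a') -> inI g (a ^+ e - a' ^+ e).
Proof.
move=> ha; elim: e => [|e ih]; first by rewrite !expr0 subrr; apply: inI0.
by rewrite !exprS; apply: cong_mul.
Qed.

Lemma msize_homog_eq e p : p != 0 -> p \is e.-homog -> msize p = e.+1.
Proof.
move=> p0 /dhomogP h; rewrite -(mlead_deg p0); congr _.+1; exact: h (mlead_supp p0).
Qed.

Lemma lin_exists_k p : p != 0 -> p \is 1.-homog -> exists k, (p^`M(k))@_0 != 0.
Proof.
move=> p0 hp; apply/existsP; apply: contraR p0 => /existsPn h.
have e := euler hp; rewrite scale1r in e; rewrite -e big1 // => i _.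
have hD : p^`M(i) = ((p^`M(i))@_0)%:MP by apply: homog0_const; exact: (deriv_homog i hp).
by rewrite hD (eqP (negPn (h i))) mpolyC0 mulr0.
Qed.

Lemma mderivXn i p e : (p ^+ e.+1)^`M(i) = e.+1%:R *: (p ^+ e * p^`M(i)).
Proof.
elim: e => [|e ih]; first by rewrite expr1 expr0 mul1r scale1r.
rewrite exprS mderivM ih -scalerAr mulrA -exprS.
rewrite [_ * p ^+ _]mulrC -[X in X + _]scale1r -scalerDl; congr (_ *: _).
Qed.

Lemma msizeM' p q : p != 0 -> q != 0 -> msize (p * q) = (msize p + msize q).-1.
Proof. exact: msizeM. Qed.

End Comp.

Section Rho.
Variables (K : fieldType) (n : nat) (g : {mpoly K[n]}) (k : 'I_n) (c : K).
Implicit Types (p q r : {mpoly K[n]}).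

Definition sig : n.-tuple {mpoly K[n]} := [tuple 'X_i - (i == k)%:R *: (c *: g) | i < n].
Definition rho p := p \mPo sig.

Lemma rhoD p q : rho (p + q) = rho p + rho q. Proof. exact: rmorphD. Qed.
Lemma rhoB p q : rho (p - q) = rho p - rho q. Proof. exact: rmorphB. Qed.
Lemma rhoN p : rho (- p) = - rho p. Proof. exact: rmorphN. Qed.
Lemma rhoM p q : rho (p * q) = rho p * rho q. Proof. exact: rmorphM. Qed.
Lemma rhoX p e : rho (p ^+ e) = rho p ^+ e. Proof. exact: rmorphXn. Qed.
Lemma rhoZ a p : rho (a *: p) = a *: rho p. Proof. exact: comp_mpolyZ. Qed.
Lemma rhoC a : rho a%:MP = a%:MP. Proof. exact: comp_mpolyC. Qed.
Lemma rho1 : rho 1 = 1. Proof. exact: rmorph1. Qed.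
Lemma rho0 : rho 0 = 0. Proof. exact: rmorph0. Qed.
Lemma rho_sum I (s : seq I) (P : pred I) (F : I -> {mpoly K[n]}) :
  rho (\sum_(i <- s | P i) F i) = \sum_(i <- s | P i) rho (F i).
Proof. exact: rmorph_sum. Qed.

Lemma rhoXi i : rho 'X_i = 'X_i - (i == k)%:R *: (c *: g).
Proof. by rewrite /rho comp_mpolyXU -tnth_nth tnth_mktuple. Qed.

Lemma rho_kern p : inI g (p - rho p).
Proof.
rewrite {1}[p]mpolyE /rho comp_mpolyEX -sumrB.
apply: (big_ind (inI g)); [exact: inI0 | exact: inID | move=> m _].
rewrite -scalerBr; apply: inIZ.
rewrite comp_mpolyX mpolyXE_id.
apply: (big_ind2 (fun a b => inI g (a - b))).
- by rewrite subrr; apply: inI0.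
- by move=> ? ? ? ? ; apply: cong_mul.
move=> i _; apply: cong_exp; rewrite tnth_mktuple.
have -> : 'X_i - ('X_i - (i == k)%:R *: (c *: g)) = ((i == k)%:R * c) *: g.
  by rewrite opprB addrC subrK scalerA.
by exists ((i == k)%:R * c)%:MP; rewrite mul_mpolyC.
Qed.


Lemma rho_ker p : rho g = 0 -> rho p = 0 -> inI g p.
Proof. by move=> _ h; have := rho_kern p; rewrite h subr0. Qed.

Lemma ker_rho p : rho g = 0 -> inI g p -> rho p = 0.
Proof. by move=> h [r ->]; rewrite rhoM h mulr0. Qed.

Lemma rho_lin p : p \is 1.-homog -> rho p = p - ((p^`M(k))@_0 * c) *: g.
Proof.
move=> hp; have e := euler hp; rewrite scale1r in e.
rewrite -{1}e rho_sum.
have hD i : p^`M(i) = ((p^`M(i))@_0)%:MP by apply: homog0_const; exact: (deriv_homog i hp).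
rewrite (eq_bigr (fun i => 'X_i * p^`M(i) - ((i == k)%:R * (p^`M(i))@_0 * c) *: g)); last first.
  move=> i _; rewrite rhoM rhoXi hD rhoC mulrBl; congr (_ - _).
  by rewrite mcoeffC eqxx mulr1 mulrC mul_mpolyC !scalerA; congr (_ *: _); ring.
rewrite sumrB e; congr (_ - _).
rewrite (bigD1 k) //= eqxx mul1r big1 ?addr0 //.
by move=> i /negbTE ->; rewrite !mul0r scale0r.
Qed.

Lemma rho_homog e p : g \is 1.-homog -> p \is e.-homog -> rho p \is e.-homog.
Proof.
move=> hg /dhomogP hp; rewrite /rho comp_mpolyEX big_seq.
apply: (big_ind (fun q => q \is e.-homog)); [exact: dhomog0 | exact: dhomogD|].
move=> m hm; apply: dhomogZ; have em : mdeg m = e := hp m hm; rewrite comp_mpolyX -em (mdegE m).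
apply: (big_ind2 (fun a b => a \is b.-homog)); [exact: dhomog1| |].
  by move=> ? ? ? ? h1 h2; apply: dhomogM.
move=> i _; rewrite -[X in X.-homog]mul1n; apply: dhomogMn; rewrite tnth_mktuple.
apply: dhomogD; first by rewrite dhomogX; apply/eqP; exact: mdeg1.
by rewrite dhomogN; apply: dhomogZ; apply: dhomogZ.
Qed.

Lemma rho_cp j p : g \is 1.-homog -> cp j (rho p) = rho (cp j p).
Proof.
move=> hg; pose N := (msize p + j).+1.
rewrite {1}(@cp_partition _ _ p N); last by rewrite /N; lia.
have hjN : (j < N)%N by rewrite /N; lia.
rewrite rho_sum cp_sum (bigD1 (Ordinal hjN)) //=.
rewrite big1 ?addr0; first by apply: cp_homog; apply: rho_homog => //; apply: cpP.
move=> i ne; apply: (cp_homog0 (k := i)); first by apply: rho_homog => //; apply: cpP.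
by move: ne; rewrite -val_eqE /= eq_sym.
Qed.

End Rho.


Section Main.
Variables (K : fieldType) (n d : nat) (f f0 f1 fd : {mpoly K[n]}).
Hypotheses (hch : [pchar K] =i pred0) (hd : (2 <= d)%N)
  (h0 : f0 \is 0.-homog) (h1 : f1 \is 1.-homog) (hdd : fd \is d.-homog)
  (hf : f = f0 + f1 + fd).

Lemma natK0 m : (m%:R : K) = 0 -> m = 0%N.
Proof. by move=> h; apply/eqP; rewrite -(pcharf0P K).1 ?h //. Qed.

Lemma cpf j : cp j f = if j == 0%N then f0 else if j == 1%N then f1 else if j == d then fd else 0.
Proof.
rewrite hf !cpD.
case: (eqVneq j 0%N) => [->|j0].
  by rewrite cp_homog // (cp_homog0 h1) // (cp_homog0 hdd) ?addr0 //; lia.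
case: (eqVneq j 1%N) => [->|j1].
  by rewrite (cp_homog h1) (cp_homog0 h0) // (cp_homog0 hdd) ?add0r ?addr0 //; lia.
rewrite (cp_homog0 h0 j0) (cp_homog0 h1 j1) !add0r.
case: (eqVneq j d) => [->|jd]; first exact: cp_homog.
exact: cp_homog0 hdd jd.
Qed.

Lemma msize_f : (msize f <= d.+1)%N.
Proof.
rewrite hf; apply: leq_trans (msizeD_le _ _) _; rewrite geq_max; apply/andP; split.
  apply: leq_trans (msizeD_le _ _) _; rewrite geq_max; apply/andP; split.
    by apply: leq_trans (msize_homog h0) _; lia.
  by apply: leq_trans (msize_homog h1) _; lia.
exact: msize_homog hdd.
Qed.

Lemma f0C : f0 = (f0@_0)%:MP.
Proof. exact: homog0_const. Qed.

Lemma f1_neq0 : jacobian_unimodular f -> f1 != 0.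
Proof.
move=> [c hc]; apply/negP => /eqP f10.
have := congr1 (cp 0) hc; rewrite cp_sum cpC /= big1.
  by move=> /esym /eqP; rewrite oner_eq0.
move=> i _; rewrite cpM0.
have -> : cp 0 f^`M(i) = 0; last by rewrite mulr0.
rewrite hf f10 addr0 mderivD f0C mderivC add0r.
apply: (cp_homog0 (deriv_homog i hdd)); lia.
Qed.

Lemma Eop_f : Eop f = f1 + d%:R *: fd.
Proof.
rewrite hf !EopD /Eop (euler h0) (euler h1) (euler hdd) scale0r add0r scale1r //.
Qed.


Lemma core_A2 (g h : {mpoly K[n]}) : f0 = 0 -> f = g * h -> cp 0 g != 0 -> h != 0 ->
  (2 <= msize g)%N -> f1 != 0 -> inI f1 fd.
Proof.
move=> f00 fgh g0 hn0 sg f1n.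
have [k hk] := lin_exists_k f1n h1.
pose c := ((f1^`M(k))@_0)^-1.
have hl : rho f1 k c f1 = 0.
  by rewrite rho_lin // /c mulfV // scale1r subrr.
have gn0 : g != 0 by apply: contraNneq g0 => ->; rewrite cp0E mcoeff0 mpolyC0.
have sh : (msize h <= d)%N.
  have := msize_f; rewrite fgh msizeM' //; lia.
have hrf : rho f1 k c f = rho f1 k c fd by rewrite hf f00 add0r rhoD hl add0r.
have IH : forall j, (j < d)%N -> rho f1 k c (cp j h) = 0.
  elim/ltn_ind => j IH jd.
  have e0 : cp j (rho f1 k c fd) = 0.
    by rewrite (rho_cp _ _ _ _ h1) (cp_homog0 hdd) ?rho0 // neq_ltn jd.
  have := congr1 (cp j) hrf; rewrite e0.
  rewrite fgh rhoM cpM big_ord_recl /= subn0 big1.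
    rewrite addr0 !(rho_cp _ _ _ _ h1) cp0E rhoC => /eqP; rewrite mulf_eq0.
    by rewrite -cp0E (negbTE g0) /= => /eqP.
  move=> i _; have hi := ltn_ord i; rewrite !(rho_cp _ _ _ _ h1) IH ?mulr0 // /bump leq0n add1n; lia.
have rh : rho f1 k c h = 0.
  by rewrite (cp_partition sh) rho_sum big1 // => j _; apply: IH.
apply: (rho_ker (k:=k) (c:=c)) => //.
by rewrite -hrf fgh rhoM rh mulr0.
Qed.


Lemma core_B (g r : {mpoly K[n]}) : jacobian_unimodular f -> msize g = 2%N ->
  f = r * g -> (3 <= msize f)%N ->
  [/\ f0 = 0, mdvd f1 f & mdvd (f1 ^+ 2) fd].
Proof.
move=> J sg frg sf.
have f1n := f1_neq0 J.
set a := g@_0; set l := cp 1 g.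
have hg : g = a%:MP + l.
  by rewrite {1}(@cp_partition _ _ g 2) ?sg // big_ord_recl big_ord1 cp0E.
have hl1 : l \is 1.-homog by apply: cpP.
have ln0 : l != 0.
  apply/eqP => l0; move: sg; rewrite hg l0 addr0 msizeC; by case: (a != 0).
have [k hk] := lin_exists_k ln0 hl1.
pose lam i := (l^`M(i))@_0.
pose c := (lam k)^-1.
have dg i : g^`M(i) = (lam i)%:MP.
  rewrite {1}hg mderivD mderivC add0r; apply: homog0_const; exact: (deriv_homog i hl1).
have rg : (rho g k c) g = 0.
  rewrite {2}hg rhoD rhoC rho_lin // -/(lam k) /c mulfV // scale1r.
  by rewrite addrA -hg subrr.
have rl : (rho g k c) l = - a%:MP.
  by apply/eqP; rewrite -subr_eq0 opprK addrC -(rhoC g k c) -rhoD -hg rg.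
have rf : (rho g k c) f = 0 by rewrite frg rhoM rg mulr0.
(* unimodularity gives (rho g k c) r constant *)
have [kap hkap] : exists kap, (rho g k c) r = kap%:MP.
  case: J => cc hcc.
  have := congr1 (rho g k c) hcc; rewrite rho1 rho_sum.
  rewrite (eq_bigr (fun i => (rho g k c) r * ((rho g k c) (cc i) * (lam i)%:MP))); last first.
    move=> i _; rewrite frg mderivM rhoM rhoD !rhoM rg dg rhoC mulr0 add0r.
    by rewrite mulrCA.
  rewrite -mulr_sumr => hu.
  have : (rho g k c) r \is a GRing.unit.
    by apply: (mpoly_intro_unit (q := \sum_(i < n) (rho g k c) (cc i) * (lam i)%:MP)); rewrite mulrC.
  by move=> /unit_const ->; eexists.
have Eg : Eop g = l.
  rewrite {1}hg EopD /Eop (euler hl1) scale1r.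
  have hC : (a%:MP : {mpoly K[n]}) \is 0.-homog by rewrite dhomogE msuppC; case: eqP => //= _; rewrite andbT mdeg0.
  by rewrite (euler hC) scale0r add0r.
have rE : rho g k c (Eop f) = - (kap * a)%:MP.
  by rewrite frg EopM Eg rhoD !rhoM rg mul0r addr0 hkap rl mulrN -rmorphM.
have hf0 : rho g k c f0 = f0 by rewrite f0C rhoC.
have e1 : f0 + rho g k c f1 + rho g k c fd = 0 by rewrite -hf0 -!rhoD -hf rf.
have e2 : rho g k c f1 + d%:R *: rho g k c fd = - (kap * a)%:MP by rewrite -rE Eop_f rhoD rhoZ.
have d1 : (d%:R - 1 : K) != 0.
  apply/eqP => h; have h' : ((d - 1)%:R : K) = 0 by rewrite natrB ?h //; lia.
  by move: (natK0 h'); lia.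
have [C1 hC1] : exists C1, rho g k c f1 = C1%:MP.
  exists ((d%:R - 1)^-1 * (kap * a - d%:R * f0@_0)).
  have eRd : rho g k c fd = - f0 - rho g k c f1.
    by apply/eqP; rewrite -subr_eq0; apply/eqP; rewrite -e1; ring.
  move: e2; rewrite eRd {1}f0C => e2.
  have e3 : (d%:R - 1) *: rho g k c f1 = (kap * a - d%:R * f0@_0)%:MP.
    have eK : (kap * a)%:MP = - (rho g k c f1 + d%:R *: (- (f0@_0)%:MP - rho g k c f1)).
      by rewrite e2 opprK.
    rewrite rmorphB /= eK (rmorphM _ (d%:R : K)) /= -!mul_mpolyC rmorphB /= rmorph1; ring.
  by rewrite rmorphM /= -e3 mul_mpolyC scalerA mulVf // scale1r.
pose al := (f1^`M(k))@_0 * c.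
have hal : f1 = al *: l.
  have := hC1; rewrite rho_lin // => e.
  have := congr1 (cp 1) e; rewrite cpB cpZ (cp_homog h1) cpC /= => /eqP.
  by rewrite subr_eq0 => /eqP.
have aln : al != 0 by apply: contraNneq f1n => e; rewrite hal e scale0r.
have rf1 : rho g k c f1 = al *: rho g k c l by rewrite {1}hal rhoZ.
have gn0 : g != 0.
  by apply/eqP => g0; move: sg; rewrite g0 msize0.
case: (eqVneq a 0) => [a0|an0].
  have gl : g = l by rewrite {1}hg a0 mpolyC0 add0r.
  have hg1 : g \is 1.-homog by rewrite gl.
  have rf1' : rho g k c f1 = 0 by rewrite rf1 -gl rg scaler0.
  have f00 : f0 = 0.
    have := congr1 (cp 0) e1; rewrite rf1' addr0 cpD (cp_homog h0) (rho_cp _ _ _ _ hg1).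
    by rewrite (cp_homog0 hdd) ?rho0 ?addr0 ?cpC //; lia.
  have rfd : rho g k c fd = 0 by move: e1; rewrite f00 rf1' !add0r.
  have [q hq] := rho_ker rg rfd.
  have hr : r = al%:MP + q.
    apply: (mulIf gn0); rewrite -frg hf f00 add0r hq hal -gl mulrDl mul_mpolyC //.
  have cq0 : cp 0 q = 0.
    have := congr1 (cp 1) hq; rewrite (cp_homog0 hdd); last by lia.
    rewrite mulrC (cpM_homog _ _ hg1) /= => /esym /eqP; rewrite mulf_eq0 (negbTE gn0) /=.
    by move=> /eqP.
  have rq0 : rho g k c q = 0.
    have e : rho g k c q = (kap - al)%:MP.
      by rewrite rmorphB /= -hkap hr rhoD rhoC addrC addKr.
    have := congr1 (cp 0) e; rewrite (rho_cp _ _ _ _ hg1) cq0 rho0 cpC /= => e'.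
    by rewrite e -e'.
  have [t ht] := rho_ker rg rq0.
  split => //.
    exists (al^-1 *: r); rewrite frg hal -gl -scalerAl -scalerAr scalerA mulVf //.
    by rewrite scale1r.
  exists ((al^-1)^+2 *: t); rewrite hq ht hal -gl exprZn -scalerAl -scalerAr scalerA.
  by rewrite -exprMn mulVf // expr1n scale1r expr2 mulrA.
have hC : (a%:MP : {mpoly K[n]}) \is 0.-homog.
  by rewrite dhomogE msuppC; case: eqP => //= _; rewrite andbT mdeg0.
have rf1a : rho g k c f1 = - (al * a)%:MP.
  by rewrite rf1 rl scalerN -mul_mpolyC -rmorphM.
have rfd : rho g k c fd = (al * a - f0@_0)%:MP.
  apply/eqP; rewrite -subr_eq0; apply/eqP; move: e1; rewrite rf1a {1}f0C => e1.
  rewrite rmorphB /= -e1; ring.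
have cpsg : forall s j, cp j (s * g) = a *: cp j s + (if (1 <= j)%N then l * cp (j - 1) s else 0).
  move=> s j; rewrite {1}hg mulrDr cpD [s * a%:MP]mulrC [s * l]mulrC (cpM_homog _ _ hC).
  by rewrite (cpM_homog _ _ hl1) /= subn0 mul_mpolyC.
have H : forall e q, q \is e.-homog -> rho g k c q = 0 -> q = 0.
  move=> e q hq rq; have [s hs] := rho_ker rg rq.
  have cs : forall j, (j < e)%N -> cp j s = 0.
    elim=> [|j ih] je.
      have := congr1 (cp 0) hs; rewrite (cp_homog0 hq) ?cpsg ?ltnn; last by rewrite eq_sym -lt0n.
      by rewrite addr0 => /esym /eqP; rewrite scaler_eq0 (negbTE an0) orFb => /eqP.
    have := congr1 (cp j.+1) hs; rewrite (cp_homog0 hq) ?cpsg ?ltn0Sn; last by rewrite eq_sym neq_ltn je orbT.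
    rewrite subSS subn0 ih ?mulr0 ?addr0; last exact: ltnW.
    by move=> /esym /eqP; rewrite scaler_eq0 (negbTE an0) orFb => /eqP.
  case: (eqVneq s 0) => [s0|sn0]; first by rewrite hs s0 mul0r.
  have ss : (e < msize s)%N.
    rewrite ltnNge; apply/negP => se; move: sn0; rewrite (cp_partition se) big1 ?eqxx //.
    by move=> j _; apply: cs.
  have := msize_homog hq; rewrite [in X in X -> _]hs msizeM' // sg => h.
  by move: h; rewrite addn2 -pred_Sn ltnS leqNgt ss.
pose e := d.-1.
have dE : d = e.+1 by rewrite /e prednK //; exact: ltnW.
have e0 : e != 0%N by rewrite /e -subn1 subn_eq0 -ltnNge.
have d0 : d != 0%N by rewrite dE.
have an' : ((- a) ^+ d) != 0 by rewrite expf_neq0 // oppr_eq0.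
pose be := (al * a - f0@_0) * ((- a) ^+ d)^-1.
have fdE : fd = be *: l ^+ e.+1.
  apply/eqP; rewrite -subr_eq0; apply/eqP; apply: (H d).
    apply: dhomogD => //; rewrite dhomogN; apply: dhomogZ.
    by rewrite -dE -[X in X.-homog]mul1n; apply: dhomogMn.
  have ea : (- a%:MP) ^+ d = ((- a) ^+ d)%:MP :> {mpoly K[n]} by rewrite rmorphXn rmorphN.
  rewrite rhoB rhoZ rhoX rl rfd -dE ea -mul_mpolyC -rmorphM /=.
  by rewrite /be -mulrA mulVf // mulr1 subrr.
have dn0 : (d%:R : K) != 0 by apply/eqP => /natK0 h0'; move: d0; rewrite h0'.
have be0 : be = 0.
  case: J => cc hcc.
  pose P := al%:MP + (be * d%:R) *: l ^+ e.
  have dfi i : f^`M(i) = P * (lam i)%:MP.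
    have dl : l^`M(i) = (lam i)%:MP by apply: homog0_const; exact: (deriv_homog i hl1).
    rewrite hf fdE hal f0C !mderivD mderivC add0r !mderivZ mderivXn dl /P mulrDl.
    by rewrite mul_mpolyC -scalerAl scalerA dE.
  have : P \is a GRing.unit.
    apply: (mpoly_intro_unit (q := \sum_(i < n) cc i * (lam i)%:MP)); rewrite -hcc mulr_suml.
    by apply: eq_bigr => i _; rewrite dfi mulrCA mulrC.
  move=> hP; have := unit_cp hP e0.
  rewrite cpD cpC cpZ cp_homog; last by rewrite -[X in X.-homog]mul1n; apply: dhomogMn.
  rewrite (negbTE e0).
  rewrite add0r => /eqP; rewrite scaler_eq0 expf_eq0 (negbTE ln0) andbF orbF mulf_eq0.
  by rewrite (negbTE dn0) orbF => /eqP.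
move: sf; rewrite hf fdE be0 scale0r addr0.
move=> sf; suff : (msize (f0 + f1) <= 2)%N by rewrite leqNgt sf.
apply: leq_trans (msizeD_le _ _) _; rewrite geq_max (msize_homog h1) andbT.
exact: leq_trans (msize_homog h0) _.
Qed.

End Main.



Unset Implicit Arguments.

Theorem corollary4p5 (K : fieldType) (n d : nat)
    (f f0 f1 fd : {mpoly K[n]}) :
  [pchar K] =i pred0 ->
  (2 <= d)%N ->
  f0 \is 0.-homog -> f1 \is 1.-homog -> fd \is d.-homog ->
  f = f0 + f1 + fd ->
  mreducible f ->
  jacobian_unimodular f ->
  (((d <= 3)%N \/ f0 = 0) -> has_linear_divisor f) /\
  (has_linear_divisor f -> [/\ f0 = 0, mdvd f1 f & mdvd (f1 ^+ 2) fd]).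
Proof.
move=> hch hd h0 h1 hdd hf [fn0 fnu [g [h [fgh gu hu]]]] J.
have gn0 : g != 0 by apply: contraNneq fn0 => g0; rewrite fgh g0 mul0r.
have hn0 : h != 0 by apply: contraNneq fn0 => h0'; rewrite fgh h0' mulr0.
have sg := nonunit_msize gn0 gu; have sh := nonunit_msize hn0 hu.
have sf : msize f = (msize g + msize h).-1 by rewrite fgh msizeM'.
have sfd := msize_f hd h0 h1 hdd hf.
split.
  case=> [d3|f00].
    case: (eqVneq (msize g) 2%N) => [eg|ng].
      by exists g; split => //; exists h; rewrite fgh mulrC.
    exists h; split; last by exists g.
    apply/eqP; rewrite eqn_leq sh andbT; move: sfd; rewrite sf.
    move: ng sg d3; set x := msize g; set y := msize h; lia.
  have f1n := f1_neq0 hd h0 h1 hdd hf J.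
  have fin : forall u v, f = u * v -> cp 0 u != 0 -> v != 0 -> (2 <= msize u)%N ->
      has_linear_divisor f.
    move=> u v fuv u0 vn0 su.
    have [q hq] := core_A2 hd h0 h1 hdd hf f00 fuv u0 vn0 su f1n.
    exists f1; split; first exact: msize_homog_eq f1n h1.
    by exists (1 + q); rewrite hf f00 add0r hq mulrDl mul1r.
  case: (eqVneq (cp 0 g) 0) => [g0|g0]; last exact: (fin g h).
  case: (eqVneq (cp 0 h) 0) => [h0'|h0']; last by apply: (fin h g) => //; rewrite mulrC.
  have := cpf hd h0 h1 hdd hf 1; rewrite /= fgh cpM big_ord_recl big_ord1 /=.
  by rewrite g0 h0' mul0r mulr0 addr0 => e; move: f1n; rewrite -e eqxx.
case=> g' [sg' [r' hr']].
apply: (core_B hch hd h0 h1 hdd hf J sg' hr').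
rewrite sf; move: sg sh; set x := msize g; set y := msize h; lia.
Qed.
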